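(* For every integer $k\ge 1$ there exists an odd integer $N\ge 3$ such that the cycle $C_N$ is a strict prime $k$th-power distance graph.
   Context: A graph $G$ is a strict prime $k$th-power distance graph if there is an injective map $L:V(G)\to\mathbb{Z}$ such that for every edge $uv$ of $G$, $|L(u)-L(v)|=p^k$ for some prime $p$ (the prime may depend on the edge). *)

(* Defs.v *)
From mathcomp Require Import all_boot all_order all_algebra.
Set Implicit Arguments. Unset Strict Implicit. Unset Printing Implicit Defensive.
Import Order.TTheory GRing.Theory Num.Theory.

Definition strict_prime_kth_power_distance_graph (k : nat) (V : finType)
  (adj : rel V) : Prop :=
  exists L : V -> int, injective L /\
    forall u v : V, adj u v ->
      exists p : nat, prime p /\ (`|L u - L v|%R = Posz (p ^ k)).

Definition cycle_adj (N : nat) : rel 'I_N :=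
  fun i j => (j == i.+1 %% N :> nat) || (i == j.+1 %% N :> nat).

(* Main.v *)
Require Import Defs.
From mathcomp Require Import all_boot all_order all_algebra.
From mathcomp Require Import zify.
Import GRing.Theory Num.Theory.

Lemma exist_ab (P Q T : nat) : coprime P Q -> 0 < P -> 0 < Q -> ~~ (P %| T) -> T <= Q ->
  exists a b, 0 < b < P /\ a * P + T = b * Q.
Proof.
move=> cPQ P0 Q0 nPT TQ.
case: (egcdnP P Q0) => u v Huv _.
have g1 : gcdn Q P = 1 by rewrite gcdnC; apply/eqP.
rewrite g1 in Huv.
set b := (T * u) %% P.
have bmod : b * Q = T %[mod P].
  rewrite /b modnMml -mulnA Huv mulnDr muln1 -modnDml mulnA modnMl add0n //.
have bP : b < P by rewrite ltn_pmod.
have b0 : 0 < b.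
  rewrite lt0n; apply/negP => /eqP b0; move: bmod; rewrite b0 mul0n mod0n => /esym/eqP.
  by rewrite -/(P %| T) (negbTE nPT).
have TbQ : T <= b * Q by apply: (leq_trans TQ); rewrite leq_pmull.
have dv : P %| b * Q - T by rewrite -eqn_mod_dvd // bmod.
exists ((b * Q - T) %/ P), b; split; first by rewrite b0 bP.
by rewrite divnK // subnK.
Qed.

Lemma dist_help (x y d : nat) : x = y + d ->
  (`|(Posz x - Posz y)%R|%R = Posz d) /\ (`|(Posz y - Posz x)%R|%R = Posz d).
Proof. move=> ->; split; lia. Qed.

Section C.
Variables (T P Q a b : nat).
Hypotheses (cPQ : coprime P Q) (T0 : 0 < T) (b0 : 0 < b) (bP : b < P)
  (E : a * P + T = b * Q).
Let N := (a + b).+1.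
Definition Lab (n : nat) : nat :=
  if n == 0 then 0 else if n <= a.+1 then T + n.-1 * P else (N - n) * Q.

Lemma P0 : 0 < P. Proof. lia. Qed.
Lemma Q0 : 0 < Q. Proof. case: Q E => [|//]; rewrite muln0; lia. Qed.

Lemma Lab_inj i j : i < j < N -> Lab i != Lab j.
Proof.
move=> /andP[ij jN]; rewrite /Lab.
have HP := P0; have HQ := Q0.
case: i ij => [|i] ij /=.
  have -> : (j == 0) = false by lia.
  case: ifP => _; first by rewrite eq_sym addn_eq0 negb_and -lt0n T0.
  by rewrite eq_sym muln_eq0; apply/norP; split; lia.
have -> : (j == 0) = false by lia.
case: ifP => hi; case: ifP => hj.
- by rewrite eqn_add2l eqn_pmul2r //; lia.
- apply/eqP => Heq.
  have H1 : (b - (N - j)) * Q = (a - i) * P.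
    rewrite mulnBl -E -Heq mulnBl; lia.
  have : P %| (b - (N - j)) * Q by rewrite H1 dvdn_mull.
  rewrite Gauss_dvdl // => /dvdn_leq; lia.
- lia.
- by rewrite eqn_pmul2r //; lia.
Qed.

Lemma Lab_N : Lab N = 0.
Proof. rewrite /Lab /N /=. have -> : ((a+b).+1 <= a.+1) = false by lia. by rewrite subnn. Qed.

Lemma Lab_S n : Lab n.+1 = if n.+1 <= a.+1 then T + n*P else (N - n.+1)*Q.
Proof. by []. Qed.

Lemma Lab_step i : i < N ->
  [\/ (Lab i.+1 = Lab i + T), (Lab i.+1 = Lab i + P) | (Lab i = Lab i.+1 + Q)].
Proof.
move=> iN; case: i iN => [|i] iN.
  by apply: Or31; rewrite /Lab /= mul0n; lia.
rewrite !Lab_S.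
case: (leqP i.+2 a.+1) => h1.
  rewrite (ltnW h1); apply: Or32; rewrite mulSn; set x := i * P; lia.
case: (leqP i.+1 a.+1) => h2.
  apply: Or33. have ia : i = a by lia. subst i.
  rewrite addnC E /N. have -> : (a + b).+1 - a.+2 = b.-1 by lia.
  have {1}-> : b = b.-1.+1 by lia. by rewrite mulSn addnC.
apply: Or33. have -> : N - i.+1 = (N - i.+2).+1 by lia. by rewrite mulSn addnC.
Qed.

Lemma Lab_mod i : i < N -> Lab ((i.+1) %% N) = Lab i.+1.
Proof.
move=> iN; case: (ltnP i.+1 N) => h; first by rewrite modn_small.
have -> : i.+1 = N by lia.
by rewrite modnn Lab_N.
Qed.
End C.

Theorem mainTheorem15 : forall k : nat, 1 <= k ->
  exists N : nat, odd N /\ 3 <= N /\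
    strict_prime_kth_power_distance_graph k (@cycle_adj N).
Proof.
move=> k k1.
set T := 2 ^ k; set P := 3 ^ k; set Q := 5 ^ k.
have cPQ : coprime P Q by rewrite /P /Q coprimeXl // coprimeXr.
have P0 : 0 < P by rewrite expn_gt0.
have Q0 : 0 < Q by rewrite expn_gt0.
have T0 : 0 < T by rewrite expn_gt0.
have nPT : ~~ (P %| T).
  apply/negP => H.
  have : 3 %| T by apply: dvdn_trans H; rewrite /P dvdn_exp.
  by rewrite /T Euclid_dvdX.
have TQ : T <= Q by rewrite /T /Q leq_exp2r.
have [a [b [/andP[b0 bP] E]]] := @exist_ab P Q T cPQ P0 Q0 nPT TQ.
have Hab : odd a = odd b.
  have := congr1 odd E; rewrite oddD !oddM /T /P /Q !oddX /=.
  have -> : (k == 0) = false by lia.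
  by rewrite /= !andbT addbF.
exists (a + b).+1; split.
  by rewrite /= oddD Hab addbb.
split.
  case: a Hab {E} => [|a] Hab; last lia.
  by case: b b0 {bP} Hab => [|[|b]].
have Hst := Lab_step _ _ _ _ _ cPQ T0 b0 bP E.
have Hmod := Lab_mod _ _ _ _ _ cPQ T0 b0 bP E.
exists (fun i : 'I_(a + b).+1 => Posz (Lab T P Q a b i)); split.
  move=> i j /= [] Hij; apply/val_inj => /=.
  case: (ltngtP i j) => // h.
  - by have := Lab_inj _ _ _ _ _ cPQ T0 b0 bP E i j; rewrite h ltn_ord Hij eqxx => /(_ isT).
  - by have := Lab_inj _ _ _ _ _ cPQ T0 b0 bP E j i; rewrite h ltn_ord Hij eqxx => /(_ isT).
have key : forall u : nat, u < (a + b).+1 -> exists p, prime p /\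
    `|(Posz (Lab T P Q a b u) - Posz (Lab T P Q a b (u.+1 %% (a + b).+1)))%R|%R = Posz (p ^ k) /\
    `|(Posz (Lab T P Q a b (u.+1 %% (a + b).+1)) - Posz (Lab T P Q a b u))%R|%R = Posz (p ^ k).
  move=> u uN; rewrite Hmod //.
  case: (Hst u uN) => H.
  - by exists 2; split => //; have [H1 H2] := dist_help _ _ _ H; split; [exact: H1 || exact: H2 | exact: H2 || exact: H1].
  - by exists 3; split => //; have [H1 H2] := dist_help _ _ _ H; split; [exact: H1 || exact: H2 | exact: H2 || exact: H1].
  - by exists 5; split => //; have [H1 H2] := dist_help _ _ _ H; split; [exact: H1 || exact: H2 | exact: H2 || exact: H1].
move=> u v /orP[] /eqP H.
- have [p [pp [H1 H2]]] := key u (ltn_ord u).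
  by exists p; split => //; rewrite /= H.
- have [p [pp [H1 H2]]] := key v (ltn_ord v).
  by exists p; split => //; rewrite /= H.
Qed.
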